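(* Let $\varepsilon^2=\xi^2+\eta^2$. (i) If $K>0$, then as $\varepsilon^2\to+\infty$ the eigenvalues of $A(\xi,\eta)$ satisfy $$\lambda_1=-K\varepsilon^2+o(\varepsilon^2),\quad \lambda_2=-\alpha\underline h\,\varepsilon^2+o(\varepsilon^2),\quad \lambda_3=-i\xi\tan\theta-\frac{s\bar\rho_s}{e\underline h}+o(1);$$ in particular the system is spectrally stable at all sufficiently high frequencies. (ii) If $K=0$ and $\xi\neq0$, then as $\varepsilon^2\to+\infty$, $$\lambda_1=\frac{s\underline c}{e\underline h}\Big(m-\frac{\xi^2}{\varepsilon^2}n\Big)+o(1),\quad \lambda_2=-\alpha\underline h\,\varepsilon^2+o(\varepsilon^2),\quad \lambda_3=-i\xi\tan\theta-\frac{s\bar\rho_s}{e\underline h}+o(1).$$ (iii) If $K=0$ and $\xi=0$, then as $\eta\to+\infty$, $$\lambda_1(0,\eta)=0,\quad \lambda_2(0,\eta)=-\alpha\underline h\,\eta^2+o(\eta^2),\quad \lambda_3(0,\eta)=\frac{s\underline c}{e\underline h}\Big(m-\frac{\bar\rho_s}{\underline c}\Big)+o(1).$$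
   Context: Parameters: $\theta\in(0,\pi/2)$, $\alpha>0$, $K\ge0$, $m,n>0$, $e,s>0$, $\bar\rho_s>0$, $\underline h>0$, $\underline c=\frac{e}{s}\underline h^m\tan^n\theta$, $a=\frac{s\bar\rho_s}{e\underline h}$. Symbol $A(\xi,\eta)=A_0+i\xi A_1-(\xi^2+\eta^2)A_2$ with $$A_0=\begin{pmatrix}0&0&0\\ \frac{am\underline c}{\underline h}&-a&0\\ -\frac{am\underline c}{\bar\rho_s}&\frac{a\underline h}{\bar\rho_s}&0\end{pmatrix},\ A_1=\begin{pmatrix}-\tan\theta&0&0\\ -\frac{\alpha an\underline c}{\tan\theta}&-\tan\theta&-\frac{\alpha an\underline c}{\tan\theta}\\ \frac{\alpha an\underline h\underline c}{\bar\rho_s\tan\theta}&0&\frac{\alpha an\underline h\underline c}{\bar\rho_s\tan\theta}\end{pmatrix},\ A_2=\begin{pmatrix}\alpha\underline h&0&\alpha\underline h\\0&0&0\\0&0&K\end{pmatrix}.$$ It is the Fourier symbol of the linearization about the constant state $(\underline h,\underline c,0)$ of the nondimensional erosion model; $\lambda_1,\lambda_2,\lambda_3$ denote its three eigenvalues. Spectrally stable at $(\xi,\eta)$ means all eigenvalues of $A(\xi,\eta)$ have strictly negative real part. *)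

(* Defs.v *)
From HB Require Import structures.
From mathcomp Require Import all_boot all_order all_algebra.
From mathcomp Require Import complex.
From mathcomp Require Import all_classical all_reals all_analysis.
Set Implicit Arguments. Unset Strict Implicit. Unset Printing Implicit Defensive.
Import Order.TTheory GRing.Theory Num.Theory ComplexField.
Local Open Scope ring_scope.
Local Open Scope complex_scope.

Definition mx3 {T : nmodType} (a11 a12 a13 a21 a22 a23 a31 a32 a33 : T) : 'M[T]_3 :=
  \matrix_(i < 3, j < 3)
    nth 0 (nth [::] [:: [:: a11; a12; a13]; [:: a21; a22; a23]; [:: a31; a32; a33]] i) j.

Definition cbar (R : realType) (theta m n e s h : R) : R :=
  e / s * (h `^ m) * ((tan theta) `^ n).

Definition acoef (R : realType) (e s rho h : R) : R := s * rho / (e * h).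

Definition A0 (R : realType) (theta m n e s rho h : R) : 'M[R[i]]_3 :=
  let c := cbar theta m n e s h in
  let a := acoef e s rho h in
  mx3 0 0 0
      (a * m * c / h)%:C (- a)%:C 0
      (- (a * m * c / rho))%:C (a * h / rho)%:C 0.

Definition A1 (R : realType) (theta alpha m n e s rho h : R) : 'M[R[i]]_3 :=
  let c := cbar theta m n e s h in
  let a := acoef e s rho h in
  let t := tan theta in
  mx3 (- t)%:C 0 0
      (- (alpha * a * n * c / t))%:C (- t)%:C (- (alpha * a * n * c / t))%:C
      (alpha * a * n * h * c / (rho * t))%:C 0 (alpha * a * n * h * c / (rho * t))%:C.

Definition A2 (R : realType) (alpha K h : R) : 'M[R[i]]_3 :=
  mx3 (alpha * h)%:C 0 (alpha * h)%:C
      0 0 0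
      0 0 K%:C.

Definition Asym (R : realType) (theta alpha K m n e s rho h : R) (xi eta : R)
  : 'M[R[i]]_3 :=
  A0 theta m n e s rho h + ('i * xi%:C) *: A1 theta alpha m n e s rho h
  - ((xi ^+ 2 + eta ^+ 2)%:C) *: A2 alpha K h.

Definition eigs3 (R : realType) (M : 'M[R[i]]_3) (l1 l2 l3 : R[i]) : Prop :=
  char_poly M = ('X - l1%:P) * ('X - l2%:P) * ('X - l3%:P).

Definition spectrally_stable (R : realType) (M : 'M[R[i]]_3) : Prop :=
  forall l : R[i], eigenvalue M l -> Re l < 0.

(* Main.v *)
Require Import Defs.
From HB Require Import structures.
From mathcomp Require Import all_boot all_order all_algebra.
From mathcomp Require Import complex.
From mathcomp Require Import all_classical all_reals all_analysis.
From mathcomp Require Import ring lra.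
Import Order.TTheory GRing.Theory Num.Theory ComplexField.
Set Implicit Arguments. Unset Strict Implicit. Unset Printing Implicit Defensive.
Local Open Scope ring_scope.
Local Open Scope complex_scope.



Lemma det_mx3 (R : comNzRingType) (a11 a12 a13 a21 a22 a23 a31 a32 a33 : R) :
  \det (mx3 a11 a12 a13 a21 a22 a23 a31 a32 a33) =
  a11 * (a22 * a33 - a23 * a32) - a12 * (a21 * a33 - a23 * a31)
  + a13 * (a21 * a32 - a22 * a31).
Proof.
rewrite (expand_det_row _ 0) !big_ord_recl big_ord0 /cofactor.
rewrite !(expand_det_row _ 0) !big_ord_recl !big_ord0 /cofactor !det_mx11 !mxE /=.
rewrite !exprS !expr0. ring.
Qed.

Lemma char_poly_mx3 (R : comNzRingType) (a11 a12 a13 a21 a22 a23 a31 a32 a33 : R) :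
  char_poly (mx3 a11 a12 a13 a21 a22 a23 a31 a32 a33) =
  'X^3 + (- (a11 + a22 + a33))%:P * 'X^2
  + (a11 * a22 + a11 * a33 - a13 * a31 + a22 * a33 - a23 * a32 - a12 * a21)%:P * 'X
  + (- (a11 * (a22 * a33 - a23 * a32) - a12 * (a21 * a33 - a23 * a31)
  + a13 * (a21 * a32 - a22 * a31)))%:P.
Proof.
rewrite /char_poly (_ : char_poly_mx _ = mx3 ('X - a11%:P) (- a12%:P) (- a13%:P)
   (- a21%:P) ('X - a22%:P) (- a23%:P) (- a31%:P) (- a32%:P) ('X - a33%:P)).
  rewrite det_mx3. rewrite !(rmorphN, rmorphD, rmorphB, rmorphM). ring.
apply/matrixP => i j; rewrite !mxE.
case: i => [[|[|[|i]]] Hi] //; case: j => [[|[|[|j]]] Hj] //=; rewrite ?mulr1n ?mulr0n ?sub0r //.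
Qed.

Lemma cubic_root (F : closedFieldType) (c2 c1 c0 : F) :
  exists x, x ^+ 3 + c2 * x ^+ 2 + c1 * x + c0 = 0.
Proof.
have [x Hx] := @solve_monicpoly F 3 (fun i => nth 0 [:: - c0; - c1; - c2] i) isT.
exists x; move: Hx; rewrite !big_ord_recl big_ord0 /= => ->.
rewrite /bump /=. ring.
Qed.

Lemma quad_root (F : closedFieldType) (c1 c0 : F) :
  exists x, x ^+ 2 + c1 * x + c0 = 0.
Proof.
have [x Hx] := @solve_monicpoly F 2 (fun i => nth 0 [:: - c0; - c1] i) isT.
exists x; move: Hx; rewrite !big_ord_recl big_ord0 /= => ->.
rewrite /bump /=. ring.
Qed.

Lemma cubic_split (F : closedFieldType) (c2 c1 c0 : F) :
  exists r1 r2 r3 : F,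
  'X^3 + c2%:P * 'X^2 + c1%:P * 'X + c0%:P = ('X - r1%:P) * ('X - r2%:P) * ('X - r3%:P).
Proof.
have [r1 H1] := @cubic_root F c2 c1 c0.
have [r2 H2] := @quad_root F (c2 + r1) (c1 + c2 * r1 + r1 ^+ 2).
exists r1, r2, (- (c2 + r1) - r2).
have -> : c0 = - (r1 ^+ 3 + c2 * r1 ^+ 2 + c1 * r1).
  by apply/eqP; rewrite -addr_eq0 addrC; apply/eqP; rewrite -H1; ring.
have -> : c1 = - (r2 ^+ 2 + (c2 + r1) * r2) - c2 * r1 - r1 ^+ 2.
  by apply/eqP; rewrite -subr_eq0; apply/eqP; rewrite -H2; ring.
rewrite !(rmorphN, rmorphD, rmorphB, rmorphM, rmorphXn). ring.
Qed.

Section Nrm.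
Variable R : rcfType.
Implicit Types z w : R[i].

Definition nrm z : R := Num.sqrt (complex.Re z ^+ 2 + complex.Im z ^+ 2).

Lemma normE z : `|z| = (nrm z)%:C.
Proof. exact: normc_def. Qed.

Lemma nrm_ge0 z : 0 <= nrm z.
Proof. exact: sqrtr_ge0. Qed.

Lemma nrmD z w : nrm (z + w) <= nrm z + nrm w.
Proof. by have := ler_normD z w; rewrite !normE -rmorphD lecR. Qed.

Lemma nrmM z w : nrm (z * w) = nrm z * nrm w.
Proof. by have := normrM z w; rewrite !normE -rmorphM => /complexI. Qed.

Lemma nrmN z : nrm (- z) = nrm z.
Proof. by have := normrN z; rewrite !normE => /complexI. Qed.

Lemma nrmB z w : nrm (z - w) <= nrm z + nrm w.
Proof. by rewrite -(nrmN w); apply: nrmD. Qed.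

Lemma nrmBC z w : nrm (z - w) = nrm (w - z).
Proof. by rewrite -nrmN opprB. Qed.

Lemma nrm_real (r : R) : nrm r%:C = `|r|.
Proof. by rewrite /nrm /= expr0n /= addr0 sqrtr_sqr. Qed.

Lemma nrm_i : nrm 'i = 1.
Proof. by rewrite /nrm /= expr0n expr1n /= add0r sqrtr1. Qed.

Lemma Re_le_nrm z : complex.Re z <= nrm z.
Proof.
rewrite /nrm; apply: le_trans (ler_norm _) _.
rewrite -sqrtr_sqr ler_sqrt; first by rewrite lerDl sqr_ge0.
by rewrite addr_ge0 ?sqr_ge0.
Qed.

Lemma nrm_lb z w : nrm z - nrm w <= nrm (z + w).
Proof.
rewrite lerBlDr; have := nrmD (z + w) (- w); rewrite nrmN addrK.
by rewrite addrC.
Qed.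

Lemma nrm_le z (r : R) : (`|z| <= r%:C) = (nrm z <= r).
Proof. by rewrite normE lecR. Qed.

Lemma min3_aux (a b c N : R) : 0 <= a -> 0 <= b -> 0 <= c ->
  N <= a * b + a * c + b * c -> a <= b -> a <= c -> a * N <= 3%:R * (a * b * c).
Proof.
move=> ha hb hc hN hab hac.
have h1 : a * N <= a * (a * b + a * c + b * c) by apply: ler_wpM2l.
have h2 : 0 <= a * b * (c - a) by apply: mulr_ge0; [apply: mulr_ge0|lra].
have h3 : 0 <= a * c * (b - a) by apply: mulr_ge0; [apply: mulr_ge0|lra].
lra.
Qed.

Lemma newton3 z r1 r2 r3 :
  let w1 := z - r1 in let w2 := z - r2 in let w3 := z - r3 in
  let N2 := nrm (w1 * w2 + w1 * w3 + w2 * w3) in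
  let N3 := nrm (w1 * w2 * w3) in
  nrm w1 * N2 <= 3%:R * N3 \/ nrm w2 * N2 <= 3%:R * N3 \/ nrm w3 * N2 <= 3%:R * N3.
Proof.
move=> w1 w2 w3 N2 N3.
have HN2 : N2 <= nrm w1 * nrm w2 + nrm w1 * nrm w3 + nrm w2 * nrm w3.
  rewrite /N2 -!nrmM; apply: le_trans (nrmD _ _) _; rewrite lerD2r; exact: nrmD.
have HN3 : N3 = nrm w1 * nrm w2 * nrm w3 by rewrite /N3 !nrmM.
have h1 := nrm_ge0 w1; have h2 := nrm_ge0 w2; have h3 := nrm_ge0 w3.
have hN := nrm_ge0 (w1 * w2 + w1 * w3 + w2 * w3); rewrite -/N2 in hN.
rewrite HN3.
have [l12|l21] := lerP (nrm w1) (nrm w2); have [l13|l31] := lerP (nrm w1) (nrm w3);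
  have [l23|l32] := lerP (nrm w2) (nrm w3).
- left; have := @min3_aux (nrm w1) (nrm w2) (nrm w3) N2; lra.
- left; have := @min3_aux (nrm w1) (nrm w2) (nrm w3) N2; lra.
- lra.
- right; right; have := @min3_aux (nrm w3) (nrm w1) (nrm w2) N2; lra.
- right; left; have := @min3_aux (nrm w2) (nrm w1) (nrm w3) N2; lra.
- lra.
- right; left; have := @min3_aux (nrm w2) (nrm w1) (nrm w3) N2; lra.
- right; right; have := @min3_aux (nrm w3) (nrm w1) (nrm w2) N2; lra.
Qed.

Lemma newton2 z r2 r3 :
  let w2 := z - r2 in let w3 := z - r3 in
  nrm w2 * nrm (w2 + w3) <= 2%:R * nrm (w2 * w3) \/
  nrm w3 * nrm (w2 + w3) <= 2%:R * nrm (w2 * w3).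
Proof.
move=> w2 w3.
have HN2 := nrmD w2 w3.
have h2 := nrm_ge0 w2; have h3 := nrm_ge0 w3; have hN := nrm_ge0 (w2 + w3).
rewrite nrmM.
have [l23|l32] := lerP (nrm w2) (nrm w3); [left|right]; nra.
Qed.

End Nrm.

Section Asym.
Variables (R : rcfType) (I : Type) (rho : I -> R).

Definition ev (P : I -> Prop) := exists r0 : R, 1 <= r0 /\ forall i, r0 <= rho i -> P i.
Definition Ok (k : nat) (f : I -> R[i]) :=
  exists C : R, 0 <= C /\ ev (fun i => nrm (f i) <= C * rho i ^+ k).
Definition Oo (k : nat) (f : I -> R[i]) :=
  forall d : R, 0 < d -> ev (fun i => nrm (f i) <= d * rho i ^+ k).

Lemma ev_mono (P Q : I -> Prop) : (forall i, P i -> Q i) -> ev P -> ev Q.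
Proof. by move=> PQ [r0 [h1 h2]]; exists r0; split => // i /h2 /PQ. Qed.

Lemma ev_and (P Q : I -> Prop) : ev P -> ev Q -> ev (fun i => P i /\ Q i).
Proof.
move=> [r1 [h1 H1]] [r2 [h2 H2]]; exists (Num.max r1 r2); split.
  by rewrite le_max h1.
by move=> i; rewrite ge_max => /andP[/H1 ? /H2 ?].
Qed.

Lemma ev_ge (r : R) : ev (fun i => r <= rho i).
Proof. exists (Num.max 1 r); split; first by rewrite le_max lexx. by move=> i; rewrite ge_max => /andP[]. Qed.

Lemma ev_true : ev (fun i => 1 <= rho i).
Proof. by exists 1; split. Qed.

Lemma Ok_ext k (f g : I -> R[i]) : (forall i, f i = g i) -> Ok k f -> Ok k g.
Proof. by move=> fg [C [hC H]]; exists C; split => //; apply: ev_mono H => i; rewrite fg. Qed.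

Lemma Oo_ext k (f g : I -> R[i]) : (forall i, f i = g i) -> Oo k f -> Oo k g.
Proof. by move=> fg H d /H; apply: ev_mono => i; rewrite fg. Qed.

Lemma Ok_add k f g : Ok k f -> Ok k g -> Ok k (fun i => f i + g i).
Proof.
move=> [C1 [h1 H1]] [C2 [h2 H2]]; exists (C1 + C2); split; first by rewrite addr_ge0.
apply: ev_mono (ev_and H1 H2) => i [a b]; apply: le_trans (nrmD _ _) _; lra.
Qed.

Lemma Ok_opp k f : Ok k f -> Ok k (fun i => - f i).
Proof. by move=> [C [hC H]]; exists C; split=> //; apply: ev_mono H => i; rewrite nrmN. Qed.

Lemma Ok_sub k f g : Ok k f -> Ok k g -> Ok k (fun i => f i - g i).
Proof. by move=> Hf /Ok_opp Hg; apply: Ok_add. Qed.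

Lemma Ok_le k l f : (k <= l)%N -> Ok k f -> Ok l f.
Proof.
move=> kl [C [hC H]]; exists C; split => //.
apply: ev_mono (ev_and H ev_true) => i [a b]; apply: le_trans a _.
apply: ler_wpM2l => //; exact: ler_weXn2l.
Qed.

Lemma Ok_mul k l f g : Ok k f -> Ok l g -> Ok (k + l) (fun i => f i * g i).
Proof.
move=> [C1 [h1 H1]] [C2 [h2 H2]]; exists (C1 * C2); split; first by rewrite mulr_ge0.
apply: ev_mono (ev_and (ev_and H1 H2) ev_true) => i [[a b] c]; rewrite nrmM exprD.
have r0 : 0 <= rho i by lra.
have := ler_pM (nrm_ge0 _) (nrm_ge0 _) a b.
by rewrite -!mulrA (mulrCA (rho i ^+ k)).
Qed.

Lemma Ok_cst (c : R[i]) : Ok 0 (fun _ => c).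
Proof.
exists (nrm c); split; first exact: nrm_ge0.
by apply: ev_mono ev_true => i _; rewrite expr0 mulr1.
Qed.

Lemma Ok_pow k j f : Ok k f -> Ok (k * j) (fun i => f i ^+ j).
Proof.
move=> H; elim: j => [|j IH].
  by rewrite muln0; apply: Ok_ext (Ok_cst 1) => i; rewrite expr0.
by rewrite mulnS; apply: Ok_ext (Ok_mul H IH) => i; rewrite exprS.
Qed.

Lemma Oo_of_Ok k f : Ok k f -> Oo k.+1 f.
Proof.
move=> [C [hC H]] d d0.
apply: ev_mono (ev_and H (ev_ge (C / d))) => i [a b].
apply: le_trans a _.
have Cd : C <= d * rho i.
  have := ler_wpM2l (ltW d0) b.
  by rewrite mulrCA divff ?mulr1 // gt_eqF.
have r0 : 0 <= rho i ^+ k.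
  rewrite exprn_ge0 //; apply: le_trans b; rewrite divr_ge0 // ltW //.
have -> : d * rho i ^+ k.+1 = (d * rho i) * rho i ^+ k by rewrite exprSr; ring.
exact: ler_wpM2r.
Qed.

Lemma Oo_add k f g : Oo k f -> Oo k g -> Oo k (fun i => f i + g i).
Proof.
move=> H1 H2 d d0.
have d2 : 0 < d / 2 by rewrite divr_gt0.
apply: ev_mono (ev_and (H1 _ d2) (H2 _ d2)) => i [a b].
apply: le_trans (nrmD _ _) _.
have -> : d * rho i ^+ k = d / 2 * rho i ^+ k + d / 2 * rho i ^+ k by field.
exact: lerD.
Qed.

Lemma Oo_opp k f : Oo k f -> Oo k (fun i => - f i).
Proof. by move=> H d /H; apply: ev_mono => i; rewrite nrmN. Qed.

Lemma Oo_sub k f g : Oo k f -> Oo k g -> Oo k (fun i => f i - g i).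
Proof. by move=> Hf /Oo_opp Hg; apply: Oo_add. Qed.

Lemma Ok_of_Oo k f : Oo k f -> Ok k f.
Proof. by move=> H; exists 1; split => //; apply: H. Qed.

Lemma Oo_mul k l f g : Ok k f -> Oo l g -> Oo (k + l) (fun i => f i * g i).
Proof.
move=> [C [hC H1]] H2 d d0.
have dC : 0 < d / (C + 1) by rewrite divr_gt0 // ltr_wpDl.
apply: ev_mono (ev_and (ev_and H1 (H2 _ dC)) ev_true) => i [[a b] c]; rewrite nrmM exprD.
have := ler_pM (nrm_ge0 _) (nrm_ge0 _) a b.
move/le_trans; apply.
have r0 : 0 <= rho i ^+ k * rho i ^+ l by rewrite mulr_ge0 // exprn_ge0 //; lra.
have -> : C * rho i ^+ k * (d / (C + 1) * rho i ^+ l) =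
   (C / (C + 1)) * d * (rho i ^+ k * rho i ^+ l) by field; lra.
rewrite ler_wpM2r // ler_piMl //; first lra.
by rewrite ler_pdivrMr ?mul1r; lra.
Qed.

Lemma ev_lb l (m r : I -> R[i]) (c : R) : 0 < c ->
  ev (fun i => c * rho i ^+ l <= nrm (m i)) -> Oo l r ->
  ev (fun i => c / 2 * rho i ^+ l <= nrm (m i + r i)).
Proof.
move=> c0 Hm Hr.
have c2 : 0 < c / 2 by rewrite divr_gt0.
apply: ev_mono (ev_and Hm (Hr _ c2)) => i [a b].
have := nrm_lb (m i) (r i).
have : c / 2 * rho i ^+ l = c * rho i ^+ l - c / 2 * rho i ^+ l by field.
lra.
Qed.

Lemma Oo_sqrt k (f g : I -> R[i]) :
  ev (fun i => nrm (f i) ^+ 2 <= nrm (g i)) -> Oo (k + k) g -> Oo k f.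
Proof.
move=> H Hg d d0.
apply: ev_mono (ev_and (ev_and H (Hg _ (mulr_gt0 d0 d0))) ev_true) => i [[a b] c].
have := le_trans a b.
have -> : d * d * rho i ^+ (k + k) = (d * rho i ^+ k) ^+ 2 by rewrite exprD; ring.
rewrite ler_pXn2r // ?nnegrE ?nrm_ge0 //.
apply: mulr_ge0; [exact: ltW | apply: exprn_ge0; lra].
Qed.

Lemma Oo_div k (w q f : I -> R[i]) (c : R) : 0 < c ->
  ev (fun i => nrm (w i) * nrm (q i) <= nrm (f i)) ->
  ev (fun i => c * rho i ^+ k.+1 <= nrm (q i)) -> Ok k f -> Oo 0 w.
Proof.
move=> c0 Hw Hq [C [hC Hf]] d d0.
apply: ev_mono (ev_and (ev_and (ev_and (ev_and Hw Hq) Hf) (ev_ge (C / (c * d)))) ev_true)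
  => i [[[[a b] e] g] r1].
have cd : 0 < c * d by rewrite mulr_gt0.
have rk : 0 < rho i ^+ k by rewrite exprn_gt0 //; lra.
have hw := nrm_ge0 (w i).
have H1 : nrm (w i) * (c * rho i ^+ k.+1) <= C * rho i ^+ k.
  apply: le_trans e; apply: le_trans a; exact: ler_wpM2l.
have H2 : (nrm (w i) * c * rho i) * rho i ^+ k <= C * rho i ^+ k.
  by move: H1; rewrite exprSr; congr (_ <= _); ring.
rewrite ler_pM2r // in H2.
have H3 : C <= c * d * rho i.
  have := ler_wpM2l (ltW cd) g.
  by rewrite mulrCA divff ?mulr1 // gt_eqF.
have H4 : (nrm (w i)) * (c * rho i) <= d * (c * rho i).
  have -> : d * (c * rho i) = c * d * rho i by ring.
  apply: le_trans H3; move: H2; congr (_ <= _); ring.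
rewrite ler_pM2r in H4; last by rewrite mulr_gt0 //; lra.
by rewrite expr0 mulr1.
Qed.

End Asym.

Section Ent.
Variable F : comNzRingType.
Variables (T P KK A U1 U2 V B1 B2 x E : F).
Definition e11 := - T * x - P * E.
Definition e13 := - (P * E).
Definition e21 := U1 - B1 * x.
Definition e22 := - A - T * x.
Definition e23 := - (B1 * x).
Definition e31 := - U2 + B2 * x.
Definition e32 := V.
Definition e33 := B2 * x - KK * E.
Definition cc2 := - (e11 + e22 + e33).
Definition cc1 := e11 * e22 + e11 * e33 - e13 * e31 + e22 * e33 - e23 * e32 - 0 * e21.
Definition cc0 := - (e11 * (e22 * e33 - e23 * e32) - 0 * (e21 * e33 - e23 * e31)
  + e13 * (e21 * e32 - e22 * e31)).
End Ent.

Lemma Asym_eq (R : realType) (theta alpha K m n e s rho h xi eta : R) :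
  let t := tan theta in let c := cbar theta m n e s h in let a := acoef e s rho h in
  let T := t%:C in let P := (alpha * h)%:C in let KK := K%:C in let A := a%:C in
  let U1 := (a * m * c / h)%:C in let U2 := (a * m * c / rho)%:C in
  let V := (a * h / rho)%:C in let B1 := (alpha * a * n * c / t)%:C in
  let B2 := (alpha * a * n * h * c / (rho * t))%:C in
  let x := 'i * xi%:C in let E := (xi ^+ 2 + eta ^+ 2)%:C in
  Asym theta alpha K m n e s rho h xi eta =
  mx3 (e11 T P x E) 0 (e13 P E) (e21 U1 B1 x) (e22 T A x) (e23 B1 x)
      (e31 U2 B2 x) (e32 V) (e33 KK B2 x E).
Proof.
move=> t c a T P KK A U1 U2 V B1 B2 x E.
rewrite /Asym /A0 /A1 /A2 -/t -/c -/a.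
apply/matrixP => i j; rewrite !mxE.
case: i => [[|[|[|i]]] Hi] //; case: j => [[|[|[|j]]] Hj] //=;
  rewrite /e11 /e13 /e21 /e22 /e23 /e31 /e32 /e33 -/x -/E ?rmorphN; ring.
Qed.

Lemma cubic_split_vieta (F : closedFieldType) (c2 c1 c0 : F) :
  exists r1 r2 r3 : F,
  'X^3 + c2%:P * 'X^2 + c1%:P * 'X + c0%:P = ('X - r1%:P) * ('X - r2%:P) * ('X - r3%:P)
  /\ r1 + r2 + r3 = - c2 /\ r1 * r2 + r1 * r3 + r2 * r3 = c1 /\ r1 * r2 * r3 = - c0.
Proof.
have [r1 H1] := @cubic_root F c2 c1 c0.
have [r2 H2] := @quad_root F (c2 + r1) (c1 + c2 * r1 + r1 ^+ 2).
exists r1, r2, (- (c2 + r1) - r2).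
have -> : c0 = - (r1 ^+ 3 + c2 * r1 ^+ 2 + c1 * r1).
  by apply/eqP; rewrite -addr_eq0 addrC; apply/eqP; rewrite -H1; ring.
have -> : c1 = - (r2 ^+ 2 + (c2 + r1) * r2) - c2 * r1 - r1 ^+ 2.
  by apply/eqP; rewrite -subr_eq0; apply/eqP; rewrite -H2; ring.
split; last by split; [ring | split; ring].
rewrite !(rmorphN, rmorphD, rmorphB, rmorphM, rmorphXn). ring.
Qed.

Lemma eigs_exist (R : realType) (M : 'M[R[i]]_3) (c2 c1 c0 : R[i]) :
  char_poly M = 'X^3 + c2%:P * 'X^2 + c1%:P * 'X + c0%:P ->
  exists r1 r2 r3, eigs3 M r1 r2 r3 /\ r1 + r2 + r3 = - c2 /\
    r1 * r2 + r1 * r3 + r2 * r3 = c1 /\ r1 * r2 * r3 = - c0.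
Proof.
move=> HM; have [r1 [r2 [r3 [E1 V]]]] := @cubic_split_vieta _ c2 c1 c0.
by exists r1, r2, r3; split => //; rewrite /eigs3 HM.
Qed.

Lemma eigs3_12 (R : realType) (M : 'M[R[i]]_3) a b c : eigs3 M a b c -> eigs3 M b a c.
Proof. by rewrite /eigs3 => ->; rewrite (mulrC ('X - a%:P)). Qed.

Lemma eigs3_23 (R : realType) (M : 'M[R[i]]_3) a b c : eigs3 M a b c -> eigs3 M a c b.
Proof. by rewrite /eigs3 => ->; rewrite mulrAC. Qed.

Lemma eigs3_13 (R : realType) (M : 'M[R[i]]_3) a b c : eigs3 M a b c -> eigs3 M c b a.
Proof. by move=> /eigs3_12 /eigs3_23 /eigs3_12. Qed.

Lemma eigs3_eigenvalue (R : realType) (M : 'M[R[i]]_3) a b c l :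
  eigs3 M a b c -> eigenvalue M l -> l = a \/ l = b \/ l = c.
Proof.
rewrite /eigs3 eigenvalue_root_char => -> .
rewrite !rootM !root_XsubC => /orP[/orP[]|] /eqP ->; tauto.
Qed.

Lemma char_poly_Asym (R : realType) (theta alpha K m n e s rho h xi eta : R) :
  let t := tan theta in let c := cbar theta m n e s h in let a := acoef e s rho h in
  let T := t%:C in let P := (alpha * h)%:C in let KK := K%:C in let A := a%:C in
  let U1 := (a * m * c / h)%:C in let U2 := (a * m * c / rho)%:C in
  let V := (a * h / rho)%:C in let B1 := (alpha * a * n * c / t)%:C in
  let B2 := (alpha * a * n * h * c / (rho * t))%:C in
  let x := 'i * xi%:C in let E := (xi ^+ 2 + eta ^+ 2)%:C in
  char_poly (Asym theta alpha K m n e s rho h xi eta) =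
  'X^3 + (cc2 T P KK A B2 x E)%:P * 'X^2 + (cc1 T P KK A U1 U2 V B1 B2 x E)%:P * 'X
  + (cc0 T P KK A U1 U2 V B1 B2 x E)%:P.
Proof. by move=> *; rewrite Asym_eq char_poly_mx3. Qed.

Lemma cubic_coef (F : comNzRingType) (a2 a1 a0 b2 b1 b0 : F) :
  'X^3 + a2%:P * 'X^2 + a1%:P * 'X + a0%:P = 'X^3 + b2%:P * 'X^2 + b1%:P * 'X + b0%:P ->
  [/\ a2 = b2, a1 = b1 & a0 = b0].
Proof.
move=> H.
have c k := congr1 (fun p : {poly F} => p`_k) H.
move: (c 2%N) (c 1%N) (c 0%N); rewrite !(coefD, coefCM, coefXn, coefX, coefC) /=.
rewrite !(mulr1, mulr0, add0r, addr0) => -> -> ->. by [].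
Qed.

Lemma vieta_of (R : realType) (M : 'M[R[i]]_3) c2 c1 c0 l1 l2 l3 :
  char_poly M = 'X^3 + c2%:P * 'X^2 + c1%:P * 'X + c0%:P -> eigs3 M l1 l2 l3 ->
  [/\ l1 + l2 + l3 = - c2, l1 * l2 + l1 * l3 + l2 * l3 = c1 & l1 * l2 * l3 = - c0].
Proof.
rewrite /eigs3 => -> HE.
have HE' : 'X^3 + c2%:P * 'X^2 + c1%:P * 'X + c0%:P = 'X^3 + (- (l1 + l2 + l3))%:P * 'X^2
   + (l1 * l2 + l1 * l3 + l2 * l3)%:P * 'X + (- (l1 * l2 * l3))%:P.
  rewrite HE !(rmorphN, rmorphD, rmorphM); ring.
have [-> -> ->] := cubic_coef HE'.
by split; rewrite ?opprK.
Qed.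

Lemma newton_roots (R : rcfType) (c2 c1 c0 z r1 r2 r3 : R[i]) :
  r1 + r2 + r3 = - c2 -> r1 * r2 + r1 * r3 + r2 * r3 = c1 -> r1 * r2 * r3 = - c0 ->
  let p := z ^+ 3 + c2 * z ^+ 2 + c1 * z + c0 in
  let dp := 3%:R * z ^+ 2 + 2%:R * c2 * z + c1 in
  nrm (z - r1) * nrm dp <= 3%:R * nrm p \/ nrm (z - r2) * nrm dp <= 3%:R * nrm p \/
  nrm (z - r3) * nrm dp <= 3%:R * nrm p.
Proof.
move=> S1 S2 S3 p dp.
have E2 : dp = (z - r1) * (z - r2) + (z - r1) * (z - r3) + (z - r2) * (z - r3).
  rewrite /dp -S2; have -> : c2 = - (r1 + r2 + r3) by rewrite S1 opprK.
  ring.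
have E3 : p = (z - r1) * (z - r2) * (z - r3).
  rewrite /p -S2; have -> : c2 = - (r1 + r2 + r3) by rewrite S1 opprK.
  have -> : c0 = - (r1 * r2 * r3) by rewrite S3 opprK.
  ring.
by rewrite E2 E3; apply: newton3.
Qed.

Ltac eperm H := first [exact: H | exact: (eigs3_12 H) | exact: (eigs3_23 H) |
  exact: (eigs3_13 H) | exact: (eigs3_12 (eigs3_23 H)) | exact: (eigs3_23 (eigs3_12 H))].

Lemma pick3 (R : realType) (M : 'M[R[i]]_3) (Q3 Q1 : R[i] -> Prop) r1 r2 r3 :
  eigs3 M r1 r2 r3 -> (Q3 r1 \/ Q3 r2 \/ Q3 r3) -> (Q1 r1 \/ Q1 r2 \/ Q1 r3) ->
  exists l1 l2 l3, eigs3 M l1 l2 l3 /\ Q3 l3 /\ (Q1 l1 \/ Q1 l3).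
Proof.
move=> He [H3|[H3|H3]] [H1|[H1|H1]].
- by exists r2, r3, r1; split; [eperm He| tauto].
- by exists r2, r3, r1; split; [eperm He| tauto].
- by exists r3, r2, r1; split; [eperm He| tauto].
- by exists r1, r3, r2; split; [eperm He| tauto].
- by exists r1, r3, r2; split; [eperm He| tauto].
- by exists r3, r1, r2; split; [eperm He| tauto].
- by exists r1, r2, r3; split; [eperm He| tauto].
- by exists r2, r1, r3; split; [eperm He| tauto].
- by exists r1, r2, r3; split; [eperm He| tauto].
Qed.

Lemma tan_pos (R : realType) (theta : R) : 0 < theta < pi / 2 -> 0 < tan theta.
Proof.
move=> /andP[h1 h2]; rewrite /tan divr_gt0 //.
  by apply: sin_gt0_pihalf; rewrite h1 h2.
apply: cos_gt0_pihalf; rewrite h2 andbT.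
have := @pi_gt0 R; lra.
Qed.

Lemma cbar_pos (R : realType) (theta m n e s h : R) :
  0 < theta < pi / 2 -> 0 < e -> 0 < s -> 0 < h -> 0 < cbar theta m n e s h.
Proof.
move=> ht he hs hh; rewrite /cbar mulr_gt0 // ?powR_gt0 ?tan_pos //.
by rewrite mulr_gt0 ?divr_gt0 ?powR_gt0.
Qed.

Lemma cc_xi0 (F : comNzRingType) (T P A U1 U2 V B1 B2 E : F) :
  [/\ cc2 T P 0 A B2 0 E = P * E + A,
      cc1 T P 0 A U1 U2 V B1 B2 0 E = P * E * (A - U2) &
      cc0 T P 0 A U1 U2 V B1 B2 0 E = P * E * (U1 * V - A * U2)].
Proof. by rewrite /cc2 /cc1 /cc0 /e11 /e13 /e21 /e22 /e23 /e31 /e32 /e33; split; ring. Qed.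

Lemma nrm_rC (R : rcfType) (r : R) : 0 <= r -> nrm r%:C = r.
Proof. by move=> h; rewrite nrm_real ger0_norm. Qed.

Lemma ev_exM (R : rcfType) (P : R -> Prop) :
  ev (fun x : R => x) P -> exists M : R, forall x, M < x -> P x.
Proof. by move=> [r0 [_ H]]; exists r0 => x /ltW /H. Qed.


Section Ids.
Variable F : comNzRingType.
Variables (T P KK A U1 U2 V B1 B2 x E : F).

Lemma pz0_id : let z0 := - T * x - A in
  z0 ^+ 3 + cc2 T P KK A B2 x E * z0 ^+ 2 + cc1 T P KK A U1 U2 V B1 B2 x E * z0
  + cc0 T P KK A U1 U2 V B1 B2 x E = E * P * U1 * V - A * B1 * V * x.
Proof. by rewrite /cc2 /cc1 /cc0 /e11 /e13 /e21 /e22 /e23 /e31 /e32 /e33 /=; ring. Qed.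

Lemma dpz0_id : let z0 := - T * x - A in
  3%:R * z0 ^+ 2 + 2%:R * cc2 T P KK A B2 x E * z0 + cc1 T P KK A U1 U2 V B1 B2 x E =
  KK * P * E ^+ 2 - P * T * x * E +
  (A ^+ 2 + (- (A * KK) - A * P - P * U2) * E + (A * B2 + A * T + B1 * V) * x).
Proof. by rewrite /cc2 /cc1 /cc0 /e11 /e13 /e21 /e22 /e23 /e31 /e32 /e33 /=; ring. Qed.

Lemma cc1_id : cc1 T P KK A U1 U2 V B1 B2 x E = KK * P * E ^+ 2 +
  ((A * KK + A * P - P * U2) * E + (- (A * B2) + A * T + B1 * V) * x
   + (2%:R * KK * T + P * T) * x * E + (- (2%:R * B2 * T) + T ^+ 2) * x ^+ 2).
Proof. by rewrite /cc2 /cc1 /cc0 /e11 /e13 /e21 /e22 /e23 /e31 /e32 /e33 /=; ring. Qed.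

Lemma cc2_id : cc2 T P KK A B2 x E = (KK + P) * E + ((T + T - B2) * x + A).
Proof. by rewrite /cc2 /e11 /e22 /e33; ring. Qed.
End Ids.

Lemma Cdiv (R : rcfType) (u v : R) : (u / v)%:C = u%:C / v%:C :> R[i].
Proof. by rewrite rmorphM fmorphV. Qed.
Lemma pL_id (F : fieldType) (AA Cc Mm N Al H Rr T y E0 tt : F) :
  H != 0 -> Rr != 0 -> T != 0 -> E0 != 0 ->
  let U1 := AA * Mm * Cc / H in let U2 := AA * Mm * Cc / Rr in let V := AA * H / Rr in
  let B1 := Al * AA * N * Cc / T in let B2 := Al * AA * N * H * Cc / (Rr * T) in
  let L1 := AA * Cc / Rr * (Mm + N * y ^+ 2 / E0) in
  let x := tt * y in let E := tt ^+ 2 * E0 in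
  L1 ^+ 3 + cc2 T (Al * H) 0 AA B2 x E * L1 ^+ 2 + cc1 T (Al * H) 0 AA U1 U2 V B1 B2 x E * L1
   + cc0 T (Al * H) 0 AA U1 U2 V B1 B2 x E =
  tt ^+ 2 * ((AA * Cc * E0^-1 * N * Rr^-1 * T ^+ 2 * y ^+ 4) + (AA * Cc * Mm * Rr^-1 * T ^+ 2 * y ^+ 2) + (AA ^+ 2 * Al * Cc * E0 * H * Mm * Rr^-1) + (AA ^+ 2 * Al * Cc * H * N * Rr^-1 * y ^+ 2) - (AA ^+ 2 * Al * Cc ^+ 2 * E0^-1 * H * N ^+ 2 * Rr ^- 2 * y ^+ 4) - (AA ^+ 2 * Al * Cc ^+ 2 * H * Mm * N * Rr ^- 2 * y ^+ 2)) + tt * ((AA ^+ 2 * Cc * E0^-1 * N * Rr^-1 * T * y ^+ 3) + (AA ^+ 2 * Cc * Mm * Rr^-1 * T * y) + (4%:R * AA ^+ 2 * Cc ^+ 2 * E0^-1 * Mm * N * Rr ^- 2 * T * y ^+ 3) + (2%:R * AA ^+ 2 * Cc ^+ 2 * E0 ^- 2 * N ^+ 2 * Rr ^- 2 * T * y ^+ 5) + (2%:R * AA ^+ 2 * Cc ^+ 2 * Mm ^+ 2 * Rr ^- 2 * T * y) - (2%:R * AA ^+ 3 * Al * Cc ^+ 3 * E0^-1 * H * Mm * N ^+ 2 * Rr ^- 3 * T^-1 * y ^+ 3) - (AA ^+ 3 * Al * Cc ^+ 3 * E0 ^- 2 * H * N ^+ 3 * Rr ^- 3 * T^-1 * y ^+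 5) - (AA ^+ 3 * Al * Cc ^+ 3 * H * Mm ^+ 2 * N * Rr ^- 3 * T^-1 * y)) + ((2%:R * AA ^+ 3 * Cc ^+ 2 * E0^-1 * Mm * N * Rr ^- 2 * y ^+ 2) + (AA ^+ 3 * Cc ^+ 2 * E0 ^- 2 * N ^+ 2 * Rr ^- 2 * y ^+ 4) + (AA ^+ 3 * Cc ^+ 2 * Mm ^+ 2 * Rr ^- 2) + (3%:R * AA ^+ 3 * Cc ^+ 3 * E0^-1 * Mm ^+ 2 * N * Rr ^- 3 * y ^+ 2) + (3%:R * AA ^+ 3 * Cc ^+ 3 * E0 ^- 2 * Mm * N ^+ 2 * Rr ^- 3 * y ^+ 4) + (AA ^+ 3 * Cc ^+ 3 * E0 ^- 3 * N ^+ 3 * Rr ^- 3 * y ^+ 6) + (AA ^+ 3 * Cc ^+ 3 * Mm ^+ 3 * Rr ^- 3)).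
Proof.
move=> hH hR hT hE U1 U2 V B1 B2 L1 x E.
rewrite /L1 /x /E /U1 /U2 /V /B1 /B2 /cc2 /cc1 /cc0 /e11 /e13 /e21 /e22 /e23 /e31 /e32 /e33.
by field; rewrite ?hR ?hE ?hT ?hH.
Qed.

Lemma dpL_id (F : fieldType) (AA Cc Mm N Al H Rr T y E0 tt : F) :
  H != 0 -> Rr != 0 -> T != 0 -> E0 != 0 ->
  let U1 := AA * Mm * Cc / H in let U2 := AA * Mm * Cc / Rr in let V := AA * H / Rr in
  let B1 := Al * AA * N * Cc / T in let B2 := Al * AA * N * H * Cc / (Rr * T) in
  let L1 := AA * Cc / Rr * (Mm + N * y ^+ 2 / E0) in
  let x := tt * y in let E := tt ^+ 2 * E0 in
  3%:R * L1 ^+ 2 + 2%:R * cc2 T (Al * H) 0 AA B2 x E * L1 + cc1 T (Al * H) 0 AA U1 U2 V B1 B2 x E =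
  tt ^+ 3 * ((Al * E0 * H * T * y)) + (tt ^+ 2 * ((AA * Al * Cc * E0 * H * Mm * Rr^-1) + (AA * Al * E0 * H) + (T ^+ 2 * y ^+ 2)) + tt * ((4%:R * AA * Cc * E0^-1 * N * Rr^-1 * T * y ^+ 3) + (4%:R * AA * Cc * Mm * Rr^-1 * T * y) + (AA * T * y) - (2%:R * AA ^+ 2 * Al * Cc ^+ 2 * E0^-1 * H * N ^+ 2 * Rr ^- 2 * T^-1 * y ^+ 3) - (2%:R * AA ^+ 2 * Al * Cc ^+ 2 * H * Mm * N * Rr ^- 2 * T^-1 * y)) + ((2%:R * AA ^+ 2 * Cc * E0^-1 * N * Rr^-1 * y ^+ 2) + (2%:R * AA ^+ 2 * Cc * Mm * Rr^-1) + (6%:R * AA ^+ 2 * Cc ^+ 2 * E0^-1 * Mm * N * Rr ^- 2 * y ^+ 2) + (3%:R * AA ^+ 2 * Cc ^+ 2 * E0 ^- 2 * N ^+ 2 * Rr ^- 2 * y ^+ 4) + (3%:R * AA ^+ 2 * Cc ^+ 2 * Mm ^+ 2 * Rr ^- 2))).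
Proof.
move=> hH hR hT hE U1 U2 V B1 B2 L1 x E.
rewrite /L1 /x /E /U1 /U2 /V /B1 /B2 /cc2 /cc1 /cc0 /e11 /e13 /e21 /e22 /e23 /e31 /e32 /e33.
by field; rewrite ?hR ?hE ?hT ?hH.
Qed.



Lemma part3 (R : realType) (theta alpha m n e s rho h : R) :
  0 < theta < pi / 2 -> 0 < alpha -> 0 < m -> 0 < n -> 0 < e -> 0 < s -> 0 < rho -> 0 < h ->
  let A := Asym theta alpha 0 m n e s rho h in
  let c := cbar theta m n e s h in
  let a := acoef e s rho h in
  exists l1 l2 l3 : R -> R[i],
      (forall eta, eigs3 (A 0 eta) (l1 eta) (l2 eta) (l3 eta)) /\
      (forall eta, l1 eta = 0) /\
      (forall d : R, 0 < d -> exists M : R, forall eta : R, M < eta ->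
         `| l2 eta - (- alpha * h * eta ^+ 2)%:C | <= (d * eta ^+ 2)%:C /\
         `| l3 eta - (s * c / (e * h) * (m - rho / c))%:C | <= d%:C).
Proof.
move=> ht ha hm hn he hs hr hh A c a.
have cp : 0 < c by apply: cbar_pos.
have ap : 0 < a by rewrite /a /acoef divr_gt0 ?mulr_gt0.
set P : R[i] := (alpha * h)%:C.
set AA : R[i] := a%:C.
set U2 : R[i] := (a * m * c / rho)%:C.
set zs := U2 - AA.
pose EE (eta : R) : R[i] := ((0:R) ^+ 2 + eta ^+ 2)%:C.
have HUV : (a * m * c / h)%:C * (a * h / rho)%:C = AA * U2 :> R[i].
  rewrite /AA /U2 -!rmorphM; congr (_%:C); field.
  by rewrite !lt0r_neq0.
have key : forall eta, exists l : R[i] * R[i],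
   eigs3 (A 0 eta) 0 l.1 l.2 /\ l.1 + l.2 = - (P * EE eta + AA) /\
   l.1 * l.2 = P * EE eta * (AA - U2) /\
   nrm (zs - l.2) * nrm ((zs - l.1) + (zs - l.2)) <= 2%:R * nrm ((zs - l.1) * (zs - l.2)).
  move=> eta.
  have Hc := char_poly_Asym theta alpha 0 m n e s rho h 0 eta; cbv zeta in Hc.
  rewrite (_ : 'i * (0:R)%:C = 0) in Hc; last by rewrite rmorph0 mulr0.
  rewrite (_ : (0:R)%:C = 0) in Hc; last by rewrite rmorph0.
  case: (cc_xi0 (tan theta)%:C P AA (a * m * c / h)%:C U2 (a * h / rho)%:C
     (alpha * a * n * c / tan theta)%:C (alpha * a * n * h * c / (rho * tan theta))%:C
     (EE eta)) => H2 H1 H0.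
  rewrite -/(EE eta) -/P -/AA -/U2 in Hc.
  rewrite H2 H1 H0 HUV subrr mulr0 in Hc.
  have [r1 [r2 [r3 [He [S1 [S2 S3]]]]]] := eigs_exist Hc.
  rewrite oppr0 in S3.
  have Hn (u v : R[i]) : exists l : R[i] * R[i], (l = (u, v) \/ l = (v, u)) /\
     nrm (zs - l.2) * nrm ((zs - l.1) + (zs - l.2)) <= 2%:R * nrm ((zs - l.1) * (zs - l.2)).
    case: (newton2 zs u v) => H.
      by exists (v, u); split; [right | rewrite /= (mulrC (zs - v)) (addrC (zs - v))].
    by exists (u, v); split; [left|].
  move/eqP: S3; rewrite !mulf_eq0 -orbA => /or3P[] /eqP Z.
  - have [l [Hl Hnl]] := Hn r2 r3; exists l; split; last split; last split => //.
    + by case: Hl => -> /=; rewrite -Z; eperm He.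
    + by case: Hl => -> /=; rewrite -S1 Z; ring.
    + by case: Hl => -> /=; rewrite -S2 Z; ring.
  - have [l [Hl Hnl]] := Hn r1 r3; exists l; split; last split; last split => //.
    + by case: Hl => -> /=; rewrite -Z; eperm He.
    + by case: Hl => -> /=; rewrite -S1 Z; ring.
    + by case: Hl => -> /=; rewrite -S2 Z; ring.
  - have [l [Hl Hnl]] := Hn r1 r2; exists l; split; last split; last split => //.
    + by case: Hl => -> /=; rewrite -Z; eperm He.
    + by case: Hl => -> /=; rewrite -S1 Z; ring.
    + by case: Hl => -> /=; rewrite -S2 Z; ring.
have /choice [f Hf] := key.
exists (fun _ => 0), (fun eta => (f eta).1), (fun eta => (f eta).2).
split; first by move=> eta; case: (Hf eta).
split; first by [].
pose rh := fun x : R => x.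
pose g3 := fun eta => zs - (f eta).2.
pose q := fun eta => P * EE eta + (zs + zs + AA).
have Hq : forall eta, (zs - (f eta).1) + (zs - (f eta).2) = q eta.
  move=> eta; case: (Hf eta) => _ [S1 _]; rewrite /q.
  have -> : (zs - (f eta).1) + (zs - (f eta).2) = zs + zs - ((f eta).1 + (f eta).2) by ring.
  rewrite S1; ring.
have Hp : forall eta, (zs - (f eta).1) * (zs - (f eta).2) = (U2 - AA) * U2.
  move=> eta; case: (Hf eta) => _ [S1 [S2 _]].
  have -> : (zs - (f eta).1) * (zs - (f eta).2) =
     zs * zs - zs * ((f eta).1 + (f eta).2) + (f eta).1 * (f eta).2 by ring.
  rewrite S1 S2 /zs; ring.
have Nw : ev rh (fun eta => nrm (g3 eta) * nrm (q eta) <= nrm ((2:R)%:C * ((U2 - AA) * U2))).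
  apply: ev_mono (ev_true rh) => eta _.
  case: (Hf eta) => _ [_ [_ H]]; rewrite Hq Hp in H.
  by rewrite nrmM nrm_rC.
have Lq : ev rh (fun eta => (alpha * h) / 2 * rh eta ^+ 2 <= nrm (q eta)).
  apply: (@ev_lb _ _ _ _ (fun eta => P * EE eta) (fun _ => zs + zs + AA)).
  - by rewrite mulr_gt0.
  - apply: ev_mono (ev_true rh) => eta _.
    rewrite nrmM /P /EE !nrm_rC ?expr0n ?add0r ?sqr_ge0 //.
    by rewrite mulr_ge0 // ltW.
  - apply: Oo_of_Ok; apply: (@Ok_le _ _ _ 0) => //; exact: Ok_cst.
have G3 : Oo rh 0 g3.
  apply: (@Oo_div _ _ _ 1 g3 q _ (alpha * h / 2) _ Nw Lq).
    by rewrite divr_gt0 // mulr_gt0.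
  apply: (@Ok_le _ _ _ 0) => //; exact: Ok_cst.
have O2 : Oo rh 2 (fun eta => g3 eta - U2).
  apply: Oo_of_Ok; apply: (@Ok_le _ _ _ 0) => //.
  apply: Ok_sub; [exact: Ok_of_Oo | exact: Ok_cst].
move=> d hd.
apply: ev_exM; apply: ev_mono (ev_and (O2 d hd) (G3 d hd)) => eta [H2 H3].
split; rewrite nrm_le.
  have -> : (f eta).1 - (- alpha * h * eta ^+ 2)%:C = g3 eta - U2.
    case: (Hf eta) => _ [S1 _].
    have -> : (f eta).1 = - (P * EE eta + AA) - (f eta).2 by rewrite -S1; ring.
    have E0 : EE eta = (eta ^+ 2)%:C by rewrite /EE; congr (_%:C); ring.
    have HH : (- alpha * h * eta ^+ 2)%:C = - ((alpha * h)%:C * (eta ^+ 2)%:C) :> R[i].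
      by rewrite -rmorphM -rmorphN; congr (_%:C); ring.
    rewrite /g3 /zs E0 HH /P; ring.
  exact: H2.
have -> : (s * c / (e * h) * (m - rho / c))%:C = zs.
  rewrite /zs /U2 /AA -rmorphB; congr (_%:C); rewrite /a /acoef; field.
  by rewrite !lt0r_neq0.
by rewrite nrmBC; move: H3; rewrite expr0 mulr1.
Qed.



Lemma Cnz (R : rcfType) (x : R) : x != 0 -> x%:C != 0 :> R[i].
Proof. by move=> hx; apply/eqP => /(congr1 (@complex.Re R)) /= /eqP; apply/negP. Qed.

Lemma Ok_id (R : rcfType) : Ok (fun t : R => t) 1 (fun t => t%:C).
Proof.
exists 1; split => //; apply: ev_mono (ev_true _) => t ht.
by rewrite nrm_rC ?mul1r ?expr1 //; apply: le_trans ht.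
Qed.

Lemma nrmX (R : rcfType) (z : R[i]) k : nrm (z ^+ k) = nrm z ^+ k.
Proof.
elim: k => [|k IH]; last by rewrite !exprS nrmM IH.
by rewrite !expr0 -(rmorph1 (real_complex R)) nrm_rC.
Qed.

Lemma Ok_quad (R : rcfType) (K2 K1 K0 : R[i]) :
  Ok (fun t : R => t) 2 (fun t => t%:C ^+ 2 * K2 + t%:C * K1 + K0).
Proof.
apply: Ok_add; first apply: Ok_add.
- exact: (Ok_mul (Ok_pow 2 (@Ok_id R)) (Ok_cst _ _)).
- apply: (@Ok_le _ _ _ 1) => //; exact: (Ok_mul (@Ok_id R) (Ok_cst _ _)).
- apply: (@Ok_le _ _ _ 0) => //; exact: Ok_cst.
Qed.

Lemma part2 (R : realType) (theta alpha m n e s rho h : R) :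
  0 < theta < pi / 2 -> 0 < alpha -> 0 < m -> 0 < n -> 0 < e -> 0 < s -> 0 < rho -> 0 < h ->
  let A := Asym theta alpha 0 m n e s rho h in
  let c := cbar theta m n e s h in
  let a := acoef e s rho h in
  forall xi0 eta0 : R, xi0 != 0 ->
    exists l1 l2 l3 : R -> R[i],
      (forall t, eigs3 (A (t * xi0) (t * eta0)) (l1 t) (l2 t) (l3 t)) /\
      (forall d : R, 0 < d -> exists M : R, forall t : R, M < t ->
         let xi := t * xi0 in
         let eps2 := xi ^+ 2 + (t * eta0) ^+ 2 in
         `| l1 t - (s * c / (e * h) * (m - xi ^+ 2 / eps2 * n))%:C | <= d%:C /\
         `| l2 t - (- alpha * h * eps2)%:C | <= (d * eps2)%:C /\
         `| l3 t - (- ('i * (xi * tan theta)%:C) - a%:C) | <= d%:C).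
Proof.
move=> ht ha hm hn he hs hr hh A c a xi0 eta0 hx0.
have tp := tan_pos ht.
have cp : 0 < c by apply: cbar_pos.
have ap : 0 < a by rewrite /a /acoef divr_gt0 ?mulr_gt0.
set E0r := xi0 ^+ 2 + eta0 ^+ 2.
have x2p : 0 < xi0 ^+ 2 by rewrite exprn_even_gt0.
have E0p : 0 < E0r by rewrite /E0r ltr_pwDl ?sqr_ge0.
have ax0 : 0 < `|xi0| by rewrite normr_gt0.
set T : R[i] := (tan theta)%:C.
set AA : R[i] := a%:C.
set y : R[i] := 'i * xi0%:C.
set E0 : R[i] := E0r%:C.
set P : R[i] := (alpha * h)%:C.
set U1 : R[i] := (a * m * c / h)%:C.
set U2 : R[i] := (a * m * c / rho)%:C.
set V : R[i] := (a * h / rho)%:C.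
set B1 : R[i] := (alpha * a * n * c / tan theta)%:C.
set B2 : R[i] := (alpha * a * n * h * c / (rho * tan theta))%:C.
pose X (t : R) : R[i] := 'i * (t * xi0)%:C.
pose EE (t : R) : R[i] := ((t * xi0) ^+ 2 + (t * eta0) ^+ 2)%:C.
have HX : forall t, X t = t%:C * y by move=> t; rewrite /X /y rmorphM; ring.
have HE : forall t, EE t = t%:C ^+ 2 * E0.
  by move=> t; rewrite /EE /E0 -rmorphXn -rmorphM; congr (_%:C); rewrite /E0r; ring.
pose C2 t := cc2 T P 0 AA B2 (X t) (EE t).
pose C1 t := cc1 T P 0 AA U1 U2 V B1 B2 (X t) (EE t).
pose C0 t := cc0 T P 0 AA U1 U2 V B1 B2 (X t) (EE t).
pose z0 t := - T * X t - AA.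
pose L1 : R[i] := AA * c%:C / rho%:C * (m%:C + n%:C * y ^+ 2 / E0).
pose pz t := z0 t ^+ 3 + C2 t * z0 t ^+ 2 + C1 t * z0 t + C0 t.
pose dpz t := 3%:R * z0 t ^+ 2 + 2%:R * C2 t * z0 t + C1 t.
pose pL t := L1 ^+ 3 + C2 t * L1 ^+ 2 + C1 t * L1 + C0 t.
pose dpL t := 3%:R * L1 ^+ 2 + 2%:R * C2 t * L1 + C1 t.
have Hc : forall t, char_poly (A (t * xi0) (t * eta0)) =
    'X^3 + (C2 t)%:P * 'X^2 + (C1 t)%:P * 'X + (C0 t)%:P.
  move=> t; have := char_poly_Asym theta alpha 0 m n e s rho h (t * xi0) (t * eta0).
  by cbv zeta; rewrite rmorph0.
pose Q3 t (r : R[i]) := nrm (z0 t - r) * nrm (dpz t) <= 3%:R * nrm (pz t).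
pose Q1 t (r : R[i]) := nrm (L1 - r) * nrm (dpL t) <= 3%:R * nrm (pL t).
have key : forall t, exists l : (R[i] * R[i]) * R[i],
    eigs3 (A (t * xi0) (t * eta0)) l.1.1 l.1.2 l.2 /\ Q3 t l.2 /\ (Q1 t l.1.1 \/ Q1 t l.2).
  move=> t; have [r1 [r2 [r3 [He [S1 [S2 S3]]]]]] := eigs_exist (Hc t).
  have N3 := newton_roots (z0 t) S1 S2 S3.
  have N1 := newton_roots L1 S1 S2 S3.
  have [l1 [l2 [l3 [He' [q3 q1]]]]] := pick3 (Q3 := Q3 t) (Q1 := Q1 t) He N3 N1.
  by exists ((l1, l2), l3).
have /choice [f Hf] := key.
pose l1 t := (f t).1.1. pose l2 t := (f t).1.2. pose l3 t := (f t).2.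
exists l1, l2, l3.
have Hv : forall t, [/\ l1 t + l2 t + l3 t = - C2 t,
    l1 t * l2 t + l1 t * l3 t + l2 t * l3 t = C1 t & l1 t * l2 t * l3 t = - C0 t].
  by move=> t; apply: vieta_of (Hc t) _; case: (Hf t).
split; first by move=> t; case: (Hf t).
pose rh := fun t : R => t.
have Ott := @Ok_id R.
have OX : Ok rh 1 X.
  by apply: Ok_ext (Ok_mul Ott (Ok_cst _ y)) => t; rewrite HX.
have OE : Ok rh 2 EE.
  by apply: Ok_ext (Ok_mul (Ok_pow 2 Ott) (Ok_cst _ E0)) => t; rewrite HE.
have Oc k (z : R[i]) : Ok rh k (fun _ => z).
  by apply: (@Ok_le _ _ _ 0) => //; apply: Ok_cst.
have Opz : Ok rh 2 (fun t => (3:R)%:C * pz t).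
  apply: Ok_ext (_ : Ok rh 2 (fun t => (3:R)%:C * (EE t * P * U1 * V - AA * B1 * V * X t))).
    by move=> t; rewrite /pz /C2 /C1 /C0 /z0 pz0_id.
  apply: (@Ok_mul _ _ _ 0 2); first exact: Ok_cst.
  apply: Ok_sub.
    exact: (Ok_mul (Ok_mul (Ok_mul OE (Ok_cst _ _)) (Ok_cst _ _)) (Ok_cst _ _)).
  apply: (@Ok_le _ _ _ 1) => //.
  exact: (Ok_mul (Ok_cst _ _) OX).
have nX : forall t, 0 <= t -> nrm (X t) = t * `|xi0|.
  by move=> t t0; rewrite /X nrmM nrm_i mul1r nrm_real normrM ger0_norm.
have nE : forall t, nrm (EE t) = t ^+ 2 * E0r.
  move=> t; rewrite /EE (_ : (t * xi0) ^+ 2 + (t * eta0) ^+ 2 = t ^+ 2 * E0r); last by rewrite /E0r; ring.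
  by rewrite nrm_rC // mulr_ge0 ?sqr_ge0 // ltW.
have nP : nrm P = alpha * h by rewrite nrm_rC // mulr_ge0 // ltW.
have nT : nrm T = tan theta by rewrite nrm_rC // ltW.
set c3 := alpha * h * tan theta * `|xi0| * E0r.
have c3p : 0 < c3.
rewrite /c3; apply: mulr_gt0 => //; apply: mulr_gt0 => //; apply: mulr_gt0 => //; exact: mulr_gt0.
pose r3 t := AA ^+ 2 + (- (AA * 0) - AA * P - P * U2) * EE t + (AA * B2 + AA * T + B1 * V) * X t.
have Edpz : forall t, dpz t = - (P * T * X t * EE t) + r3 t.
  by move=> t; rewrite /dpz /C2 /C1 /z0 dpz0_id /r3; ring.
have Or3 : Ok rh 2 r3.
  apply: Ok_add; first apply: Ok_add.
  - exact: Oc.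
  - exact: (Ok_mul (Ok_cst _ _) OE).
  - apply: (@Ok_le _ _ _ 1) => //; exact: (Ok_mul (Ok_cst _ _) OX).
have Ldpz : ev rh (fun t => c3 / 2 * rh t ^+ 3 <= nrm (dpz t)).
  have Lm : ev rh (fun t => c3 * rh t ^+ 3 <= nrm (- (P * T * X t * EE t))).
    apply: ev_mono (ev_true rh) => t t1.
    have t0 : 0 <= t by apply: le_trans t1.
    rewrite nrmN !nrmM nP nT nE nrm_i mul1r nrm_real normrM (ger0_norm t0).
    by rewrite /c3 /rh le_eqVlt; apply/orP; left; apply/eqP; ring.
  have := ev_lb c3p Lm (Oo_of_Ok Or3).
  by apply: ev_mono => t; rewrite Edpz.
have W3 : Oo rh 0 (fun t => z0 t - l3 t).
  apply: (@Oo_div _ _ _ 2 _ dpz (fun t => (3:R)%:C * pz t) (c3 / 2) _ _ Ldpz Opz).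
    by rewrite divr_gt0.
  apply: ev_mono (ev_true rh) => t _.
  case: (Hf t) => _ [H _]; rewrite nrmM nrm_rC //; exact: H.
have hH : h%:C != 0 :> R[i] by apply: Cnz; rewrite lt0r_neq0.
have hR : rho%:C != 0 :> R[i] by apply: Cnz; rewrite lt0r_neq0.
have hT : T != 0 by apply: Cnz; rewrite lt0r_neq0.
have hE : E0 != 0 by apply: Cnz; rewrite lt0r_neq0.
have eP : P = alpha%:C * h%:C by rewrite /P rmorphM.
have eU1 : U1 = AA * m%:C * c%:C / h%:C by rewrite /U1 /AA Cdiv !rmorphM.
have eU2 : U2 = AA * m%:C * c%:C / rho%:C by rewrite /U2 /AA Cdiv !rmorphM.
have eV : V = AA * h%:C / rho%:C by rewrite /V /AA Cdiv !rmorphM.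
have eB1 : B1 = alpha%:C * AA * n%:C * c%:C / T by rewrite /B1 /AA /T Cdiv !rmorphM.
have eB2 : B2 = alpha%:C * AA * n%:C * h%:C * c%:C / (rho%:C * T).
  by rewrite /B2 /AA /T Cdiv !rmorphM.
have OpL : Ok rh 2 (fun t => (3:R)%:C * pL t).
  apply: (@Ok_mul _ _ _ 0 2); first exact: Ok_cst.
  apply: Ok_ext (Ok_quad _ _ _) => t; symmetry.
  have H := @pL_id _ AA c%:C m%:C n%:C alpha%:C h%:C rho%:C T y E0 t%:C hH hR hT hE.
  cbv zeta in H.
  rewrite /pL /C2 /C1 /C0 HX HE eP eU1 eU2 eV eB1 eB2; exact: H.
have Ldpl : ev rh (fun t => c3 / 2 * rh t ^+ 3 <= nrm (dpL t)).
  have Lm : ev rh (fun t => c3 * rh t ^+ 3 <=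
                  nrm (t%:C ^+ 3 * (alpha%:C * E0 * h%:C * T * y))).
    apply: ev_mono (ev_true rh) => t t1.
    have t0 : 0 <= t by apply: le_trans t1.
    rewrite !nrmM (nrm_real xi0) !nrm_rC ?(ltW ha) ?(ltW hh) ?(ltW E0p) ?(ltW tp) // ?nrm_i -?complexiE ?nrm_i.
    by rewrite /c3 /rh le_eqVlt; apply/orP; left; apply/eqP; ring.
  have [K2 [K1 [K0 HK]]] : exists K2 K1 K0 : R[i], forall t,
      dpL t = t%:C ^+ 3 * (alpha%:C * E0 * h%:C * T * y) + (t%:C ^+ 2 * K2 + t%:C * K1 + K0).
    eexists; eexists; eexists => t.
    have H := @dpL_id _ AA c%:C m%:C n%:C alpha%:C h%:C rho%:C T y E0 t%:C hH hR hT hE.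
    cbv zeta in H.
    rewrite /dpL /C2 /C1 HX HE eP eU1 eU2 eV eB1 eB2; exact: H.
  have := ev_lb c3p Lm (Oo_of_Ok (Ok_quad K2 K1 K0)).
  by apply: ev_mono => t; rewrite HK.
pose wsel t := if Q1 t (l1 t) then L1 - l1 t else L1 - l3 t.
have Ws : Oo rh 0 wsel.
  apply: (@Oo_div _ _ _ 2 _ dpL (fun t => (3:R)%:C * pL t) (c3 / 2) _ _ Ldpl OpL).
    by rewrite divr_gt0.
  apply: ev_mono (ev_true rh) => t _.
  rewrite nrmM nrm_rC // /wsel.
  case: ifP => [//|/negbT HQ].
  by case: (Hf t) => _ [_ [H|H]] //; move: HQ; rewrite /l1 H.
have Sep : ev rh (fun t => 2 <= nrm (z0 t - L1)).
  have cc : 0 < tan theta * `|xi0| by rewrite mulr_gt0.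
  have Lm : ev rh (fun t => tan theta * `|xi0| * rh t ^+ 1 <= nrm (- (T * X t))).
    apply: ev_mono (ev_true rh) => t t1.
    have t0 : 0 <= t by apply: le_trans t1.
    rewrite nrmN nrmM nT nX // /rh expr1.
    by rewrite le_eqVlt; apply/orP; left; apply/eqP; ring.
  have := ev_lb cc Lm (Oo_of_Ok (Oc 0%N (- AA - L1))).
  move=> H; apply: ev_mono (ev_and H (ev_ge rh (4 / (tan theta * `|xi0|)))) => t [H1 H2].
  have -> : z0 t - L1 = - (T * X t) + (- AA - L1) by rewrite /z0; ring.
  apply: le_trans H1; rewrite /rh expr1.
  have := ler_wpM2l (ltW cc) H2.
  rewrite mulrCA divff ?mulr1 ?gt_eqF //.
  by rewrite /rh => H3; lra.
have W1 : Oo rh 0 (fun t => L1 - l1 t).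
  move=> d hd; have h2 : 0 < 1 / 2 :> R by [].
  apply: ev_mono (ev_and (ev_and (ev_and (Ws d hd) (Ws _ h2)) (W3 _ h2)) Sep)
    => t [[[Wd Wh] W3h] St].
  move: Wd Wh; rewrite /wsel; case: ifP => _ Wd Wh //.
  exfalso; have := nrmB (z0 t - l3 t) (L1 - l3 t).
  rewrite (_ : z0 t - l3 t - (L1 - l3 t) = z0 t - L1); last by ring.
  rewrite expr0 mulr1 in Wh W3h; lra.
have Oz0 : Ok rh 1 z0.
  apply: Ok_sub; first exact: (Ok_mul (Ok_cst _ _) OX).
  exact: Oc.
have O2 : Oo rh 2 (fun t => l2 t + P * EE t).
  apply: Oo_ext (_ : Oo rh 2 (fun t => - ((T + T - B2) * X t + AA) - L1 + (L1 - l1 t)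
                                       - z0 t + (z0 t - l3 t))).
    move=> t; case: (Hv t) => S1 _ _.
    have -> : l2 t = - C2 t - l1 t - l3 t by rewrite -S1; ring.
    rewrite /C2 cc2_id; ring.
  apply: Oo_of_Ok; apply: Ok_add; first apply: Ok_sub; first apply: Ok_add;
    first apply: Ok_sub.
  - apply: Ok_opp; apply: Ok_add; first exact: (Ok_mul (Ok_cst _ _) OX).
    exact: Oc.
  - exact: Oc.
  - apply: (@Ok_le _ _ _ 0) => //; exact: Ok_of_Oo.
  - exact: Oz0.
  - apply: (@Ok_le _ _ _ 0) => //; exact: Ok_of_Oo.
move=> d hd.
have dE : 0 < d * E0r by rewrite mulr_gt0.
apply: ev_exM.
apply: ev_mono (ev_and (ev_and (ev_and (W1 d hd) (O2 _ dE)) (W3 d hd)) (ev_true rh))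
  => t [[[H1 H2] H3] t1] xi eps2.
rewrite /rh in t1; rewrite expr0 mulr1 in H1 H3.
have tn0 : t != 0 by rewrite gt_eqF //; lra.
have Heps : eps2 = t ^+ 2 * E0r by rewrite /eps2 /xi /E0r; ring.
split; last split; rewrite nrm_le.
- have R1 : s * c / (e * h) * (m - xi ^+ 2 / eps2 * n) = a * c / rho * (m - n * xi0 ^+ 2 / E0r).
    rewrite Heps /xi /a /acoef; field.
    by rewrite tn0 !gt_eqF.
  have R2 : forall a' c' E' : R, E' != 0 ->
      (a' * c' / rho * (m - n * xi0 ^+ 2 / E'))%:C =
      a'%:C * c'%:C / rho%:C * (m%:C + n%:C * ('i * xi0%:C) ^+ 2 / E'%:C) :> R[i].
    move=> a' c' E' hE'; rewrite exprMn sqr_i !(rmorphM, rmorphB, Cdiv, rmorphXn, rmorphN).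
    by field; rewrite hR Cnz.
  rewrite R1 R2 ?gt_eqF // nrmBC; exact: H1.
- have -> : l2 t - (- alpha * h * eps2)%:C = l2 t + P * EE t.
    by rewrite /P /EE -/xi -/eps2 -rmorphM (_ : - alpha * h * eps2 = - (alpha * h * eps2)) ?rmorphN;
      [ring | ring].
  move: H2; rewrite /rh Heps => H2; lra.
- have -> : - ('i * (xi * tan theta)%:C) - AA = z0 t.
    by rewrite /z0 /X /T /AA /xi rmorphM; ring.
  by rewrite nrmBC.
Qed.



Lemma ReD (R : rcfType) (z w : R[i]) : complex.Re (z + w) = complex.Re z + complex.Re w.
Proof. by case: z => ? ?; case: w. Qed.
Lemma ReN (R : rcfType) (z : R[i]) : complex.Re (- z) = - complex.Re z.
Proof. by case: z. Qed.

Lemma Re_le (R : rcfType) (z w : R[i]) : complex.Re z <= complex.Re w + nrm (z - w).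
Proof.
have := Re_le_nrm (z - w); rewrite ReD ReN.
lra.
Qed.

Lemma Re_z0 (R : rcfType) (t xi a : R) :
  complex.Re (- t%:C * ('i * xi%:C) - a%:C) = - a.
Proof. by rewrite /=; ring. Qed.

Lemma Re_KE (R : rcfType) (x y : R) : complex.Re (- (x%:C * y%:C)) = - (x * y).
Proof. by rewrite /=; ring. Qed.

Lemma ev_exM2 (R : rcfType) (P : R * R -> Prop) :
  ev (fun q : R * R => Num.sqrt (q.1 ^+ 2 + q.2 ^+ 2)) P ->
  exists M : R, forall xi eta, M < xi ^+ 2 + eta ^+ 2 -> P (xi, eta).
Proof.
move=> [r0 [r1 H]]; exists (r0 ^+ 2) => xi eta hM; apply: H => /=.
have r0p : 0 <= r0 by apply: le_trans r1.
rewrite -(ger0_norm r0p) -sqrtr_sqr ler_sqrt; first exact: ltW.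
by rewrite addr_ge0 ?sqr_ge0.
Qed.

Lemma part1 (R : realType) (theta alpha K m n e s rho h : R) :
  0 < theta < pi / 2 -> 0 < alpha -> 0 < K -> 0 < m -> 0 < n ->
  0 < e -> 0 < s -> 0 < rho -> 0 < h ->
  let A := Asym theta alpha K m n e s rho h in
  let c := cbar theta m n e s h in
  let a := acoef e s rho h in
    (exists l1 l2 l3 : R -> R -> R[i],
      (forall xi eta, eigs3 (A xi eta) (l1 xi eta) (l2 xi eta) (l3 xi eta)) /\
      (forall d : R, 0 < d -> exists M : R, forall xi eta : R,
         M < xi ^+ 2 + eta ^+ 2 ->
         `| l1 xi eta - (- K * (xi ^+ 2 + eta ^+ 2))%:C |
            <= (d * (xi ^+ 2 + eta ^+ 2))%:C /\
         `| l2 xi eta - (- alpha * h * (xi ^+ 2 + eta ^+ 2))%:C |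
            <= (d * (xi ^+ 2 + eta ^+ 2))%:C /\
         `| l3 xi eta - (- ('i * (xi * tan theta)%:C) - a%:C) | <= d%:C)) /\
    (exists M : R, forall xi eta : R,
       M < xi ^+ 2 + eta ^+ 2 -> spectrally_stable (A xi eta)).
Proof.
move=> ht ha hK hm hn he hs hr hh A c a.
have tp := tan_pos ht.
have cp : 0 < c by apply: cbar_pos.
have ap : 0 < a by rewrite /a /acoef divr_gt0 ?mulr_gt0.
set T : R[i] := (tan theta)%:C.
set AA : R[i] := a%:C.
set KK : R[i] := K%:C.
set P : R[i] := (alpha * h)%:C.
set U1 : R[i] := (a * m * c / h)%:C.
set U2 : R[i] := (a * m * c / rho)%:C.
set V : R[i] := (a * h / rho)%:C.
set B1 : R[i] := (alpha * a * n * c / tan theta)%:C.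
set B2 : R[i] := (alpha * a * n * h * c / (rho * tan theta))%:C.
pose X (q : R * R) : R[i] := 'i * q.1%:C.
pose EE (q : R * R) : R[i] := (q.1 ^+ 2 + q.2 ^+ 2)%:C.
pose C2 q := cc2 T P KK AA B2 (X q) (EE q).
pose C1 q := cc1 T P KK AA U1 U2 V B1 B2 (X q) (EE q).
pose C0 q := cc0 T P KK AA U1 U2 V B1 B2 (X q) (EE q).
pose z0 q := - T * X q - AA.
pose pz q := z0 q ^+ 3 + C2 q * z0 q ^+ 2 + C1 q * z0 q + C0 q.
pose dpz q := 3%:R * z0 q ^+ 2 + 2%:R * C2 q * z0 q + C1 q.
have Hc : forall q : R * R, char_poly (A q.1 q.2) =
    'X^3 + (C2 q)%:P * 'X^2 + (C1 q)%:P * 'X + (C0 q)%:P.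
  by move=> q; have := char_poly_Asym theta alpha K m n e s rho h q.1 q.2; cbv zeta.
pose Q3 q (r : R[i]) := nrm (z0 q - r) * nrm (dpz q) <= 3%:R * nrm (pz q).
have key : forall q, exists l : (R[i] * R[i]) * R[i],
    eigs3 (A q.1 q.2) l.1.1 l.1.2 l.2 /\ Q3 q l.2 /\
    nrm (l.1.1 + KK * EE q) <= nrm (l.1.2 + KK * EE q).
  move=> q; have [r1 [r2 [r3 [He [S1 [S2 S3]]]]]] := eigs_exist (Hc q).
  have N3 := newton_roots (z0 q) S1 S2 S3.
  have [l1 [l2 [l3 [He' [q3 _]]]]] := pick3 (Q3 := Q3 q) (Q1 := fun _ => True) He N3
    (or_introl I).
  have [le12|lt21] := lerP (nrm (l1 + KK * EE q)) (nrm (l2 + KK * EE q)).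
    by exists ((l1, l2), l3).
  by exists ((l2, l1), l3); split; [exact: eigs3_12 | split => //; exact: ltW].
have /choice [f Hf] := key.
pose l1 q := (f q).1.1. pose l2 q := (f q).1.2. pose l3 q := (f q).2.
have Hv : forall q, [/\ l1 q + l2 q + l3 q = - C2 q,
    l1 q * l2 q + l1 q * l3 q + l2 q * l3 q = C1 q & l1 q * l2 q * l3 q = - C0 q].
  by move=> q; apply: vieta_of (Hc q) _; case: (Hf q).
pose rh := fun q : R * R => Num.sqrt (q.1 ^+ 2 + q.2 ^+ 2).
have Eg0 : forall q : R * R, 0 <= q.1 ^+ 2 + q.2 ^+ 2 by move=> q; rewrite addr_ge0 ?sqr_ge0.
have rh0 : forall q, 0 <= rh q by move=> q; exact: sqrtr_ge0.
have nE : forall q, nrm (EE q) = rh q ^+ 2.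
  by move=> q; rewrite /EE nrm_rC // /rh sqr_sqrtr.
have nX : forall q, nrm (X q) <= rh q.
  move=> q; rewrite /X nrmM nrm_i mul1r nrm_real /rh -sqrtr_sqr ler_sqrt //.
  by rewrite lerDl sqr_ge0.
have OX : Ok rh 1 X.
  exists 1; split => //; apply: ev_mono (ev_true rh) => q _.
  by rewrite mul1r expr1.
have OE : Ok rh 2 EE.
  by exists 1; split => //; apply: ev_mono (ev_true rh) => q _; rewrite mul1r nE.
have Oc k (z : R[i]) : Ok rh k (fun _ => z).
  by apply: (@Ok_le _ _ _ 0) => //; apply: Ok_cst.
have Opz : Ok rh 3 (fun q => (3:R)%:C * pz q).
  apply: Ok_ext (_ : Ok rh 3 (fun q => (3:R)%:C * (EE q * P * U1 * V - AA * B1 * V * X q))).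
    by move=> q; rewrite /pz /C2 /C1 /C0 /z0 pz0_id.
  apply: (@Ok_mul _ _ _ 0 3); first exact: Ok_cst.
  apply: Ok_sub.
    apply: (@Ok_le _ _ _ 2) => //.
    exact: (Ok_mul (Ok_mul (Ok_mul OE (Ok_cst _ _)) (Ok_cst _ _)) (Ok_cst _ _)).
  apply: (@Ok_le _ _ _ 1) => //.
  exact: (Ok_mul (Ok_cst _ _) OX).
set c4 := K * (alpha * h).
have c4p : 0 < c4 by rewrite /c4 !mulr_gt0.
pose r3 q := - (P * T * X q * EE q) +
  (AA ^+ 2 + (- (AA * KK) - AA * P - P * U2) * EE q + (AA * B2 + AA * T + B1 * V) * X q).
have Edpz : forall q, dpz q = KK * P * EE q ^+ 2 + r3 q.
  by move=> q; rewrite /dpz /C2 /C1 /z0 dpz0_id /r3; ring.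
have Or3 : Ok rh 3 r3.
  apply: Ok_add; first apply: Ok_opp.
    exact: (Ok_mul (Ok_mul (Ok_cst _ _) OX) OE).
  apply: Ok_add; first apply: Ok_add.
  - exact: Oc.
  - apply: (@Ok_le _ _ _ 2) => //; exact: (Ok_mul (Ok_cst _ _) OE).
  - apply: (@Ok_le _ _ _ 1) => //; exact: (Ok_mul (Ok_cst _ _) OX).
have Ldpz : ev rh (fun q => c4 / 2 * rh q ^+ 4 <= nrm (dpz q)).
  have Lm : ev rh (fun q => c4 * rh q ^+ 4 <= nrm (KK * P * EE q ^+ 2)).
    apply: ev_mono (ev_true rh) => q _.
    rewrite !nrmM !nE /KK /P !nrm_rC ?(ltW hK) ?mulr_ge0 ?(ltW ha) ?(ltW hh) //.
    by rewrite /c4 le_eqVlt; apply/orP; left; apply/eqP; ring.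
  have := ev_lb c4p Lm (Oo_of_Ok Or3).
  by apply: ev_mono => q; rewrite Edpz.
have W3 : Oo rh 0 (fun q => z0 q - l3 q).
  apply: (@Oo_div _ _ _ 3 _ dpz (fun q => (3:R)%:C * pz q) (c4 / 2) _ _ Ldpz Opz).
    by rewrite divr_gt0.
  apply: ev_mono (ev_true rh) => q _.
  case: (Hf q) => _ [H _]; rewrite nrmM nrm_rC //; exact: H.
have Oz0 : Ok rh 1 z0.
  apply: Ok_sub; first exact: (Ok_mul (Ok_cst _ _) OX).
  exact: Oc.
have Ol3 : Ok rh 1 l3.
  apply: Ok_ext (Ok_sub Oz0 (Ok_le (isT : (0 <= 1)%N) (Ok_of_Oo W3))) => q.
  by rewrite opprB addrC subrK.
pose c2r q := (T + T - B2) * X q + AA.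
pose c1r q := (AA * KK + AA * P - P * U2) * EE q + (- (AA * B2) + AA * T + B1 * V) * X q
   + (2%:R * KK * T + P * T) * X q * EE q + (- (2%:R * B2 * T) + T ^+ 2) * X q ^+ 2.
have EC2 : forall q, C2 q = (KK + P) * EE q + c2r q by move=> q; rewrite /C2 cc2_id.
have EC1 : forall q, C1 q = KK * P * EE q ^+ 2 + c1r q by move=> q; rewrite /C1 cc1_id.
have Oc2r : Ok rh 1 c2r.
  apply: Ok_add; first exact: (Ok_mul (Ok_cst _ _) OX).
  exact: Oc.
have OC2 : Ok rh 2 C2.
  apply: Ok_ext (Ok_add (Ok_mul (Ok_cst _ (KK + P)) OE) (Ok_le (isT : (1 <= 2)%N) Oc2r)).
  by move=> q; rewrite EC2.
have Oc1r : Ok rh 3 c1r.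
  apply: Ok_add; first apply: Ok_add; first apply: Ok_add.
  - apply: (@Ok_le _ _ _ 2) => //; exact: (Ok_mul (Ok_cst _ _) OE).
  - apply: (@Ok_le _ _ _ 1) => //; exact: (Ok_mul (Ok_cst _ _) OX).
  - exact: (Ok_mul (Ok_mul (Ok_cst _ _) OX) OE).
  - apply: (@Ok_le _ _ _ 2) => //; exact: (Ok_mul (Ok_cst _ _) (Ok_pow 2 OX)).
pose ea q := (l1 q + KK * EE q) * (l2 q + KK * EE q).
have Oea : Ok rh 3 ea.
  apply: Ok_ext (_ : Ok rh 3 (fun q => c1r q + l3 q * C2 q + l3 q ^+ 2
                                        - KK * EE q * c2r q - KK * EE q * l3 q)).
    move=> q; case: (Hv q) => S1 S2 _.
    have Es : l1 q + l2 q = - C2 q - l3 q by rewrite -S1; ring.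
    have Ep : l1 q * l2 q = C1 q - l3 q * (l1 q + l2 q) by rewrite -S2; ring.
    have -> : ea q = l1 q * l2 q + KK * EE q * (l1 q + l2 q) + KK ^+ 2 * EE q ^+ 2.
      by rewrite /ea; ring.
    rewrite Ep Es EC1 EC2; ring.
  apply: Ok_sub; first apply: Ok_sub; first apply: Ok_add; first apply: Ok_add.
  - exact: Oc1r.
  - exact: (Ok_mul Ol3 OC2).
  - apply: (@Ok_le _ _ _ 2) => //; exact: (Ok_pow 2 Ol3).
  - exact: (Ok_mul (Ok_mul (Ok_cst _ _) OE) Oc2r).
  - exact: (Ok_mul (Ok_mul (Ok_cst _ _) OE) Ol3).
have W1 : Oo rh 2 (fun q => l1 q + KK * EE q).
  apply: (@Oo_sqrt _ _ _ 2 _ ea); last exact: Oo_of_Ok Oea.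
  apply: ev_mono (ev_true rh) => q _.
  case: (Hf q) => _ [_ H]; rewrite /ea nrmM expr2.
  by apply: ler_wpM2l => //; exact: nrm_ge0.
have W2 : Oo rh 2 (fun q => l2 q + P * EE q).
  apply: Oo_ext (_ : Oo rh 2 (fun q => (- c2r q - l3 q) - (l1 q + KK * EE q))).
    move=> q; case: (Hv q) => S1 _ _.
    have -> : l2 q = - C2 q - l1 q - l3 q by rewrite -S1; ring.
    by rewrite EC2; ring.
  apply: Oo_sub => //; apply: Oo_of_Ok; apply: Ok_sub => //.
  exact: Ok_opp.
have rhE : forall q, rh q ^+ 2 = q.1 ^+ 2 + q.2 ^+ 2 by move=> q; rewrite sqr_sqrtr.
split.
  exists (fun xi eta => l1 (xi, eta)), (fun xi eta => l2 (xi, eta)), (fun xi eta => l3 (xi, eta)).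
  split; first by move=> xi eta; case: (Hf (xi, eta)).
  move=> d hd.
  suff HH : ev rh (fun q =>
         `| l1 q - (- K * (q.1 ^+ 2 + q.2 ^+ 2))%:C | <= (d * (q.1 ^+ 2 + q.2 ^+ 2))%:C /\
         `| l2 q - (- alpha * h * (q.1 ^+ 2 + q.2 ^+ 2))%:C | <= (d * (q.1 ^+ 2 + q.2 ^+ 2))%:C /\
         `| l3 q - (- ('i * (q.1 * tan theta)%:C) - AA) | <= d%:C).
    by have [M HM] := ev_exM2 HH; exists M => xi eta /HM.
  apply: ev_mono (ev_and (ev_and (W1 d hd) (W2 d hd)) (W3 d hd)) => q [[H1 H2] H3].
  rewrite !nrm_le; rewrite rhE in H1 H2; split; last split.
  - rewrite (_ : (- K * (q.1 ^+ 2 + q.2 ^+ 2))%:C = - (KK * EE q)); last first.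
      by rewrite /KK /EE -rmorphM -rmorphN mulNr.
    by rewrite opprK.
  - rewrite (_ : (- alpha * h * (q.1 ^+ 2 + q.2 ^+ 2))%:C = - (P * EE q)); last first.
      by rewrite /P /EE -rmorphM -rmorphN !mulNr.
    by rewrite opprK.
  - rewrite (_ : - ('i * (q.1 * tan theta)%:C) - AA = z0 q); last first.
      by rewrite /z0 /X /T rmorphM; ring.
    by rewrite nrmBC; move: H3; rewrite expr0 mulr1.
have hK2 : 0 < K / 2 by rewrite divr_gt0.
have hP2 : 0 < alpha * h / 2 by rewrite divr_gt0 // mulr_gt0.
have ha2 : 0 < a / 2 by rewrite divr_gt0.
suff HH : ev rh (fun q => spectrally_stable (A q.1 q.2)).
  by have [M HM] := ev_exM2 HH; exists M => xi eta /HM.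
apply: ev_mono (ev_and (ev_and (ev_and (W1 _ hK2) (W2 _ hP2)) (W3 _ ha2)) (ev_true rh))
  => q [[[H1 H2] H3] r1] l hl.
have He : eigs3 (A q.1 q.2) (l1 q) (l2 q) (l3 q) by case: (Hf q).
have r2 : 1 <= rh q ^+ 2 by rewrite expr2; have := mulr_ege1 r1 r1; lra.
case: (eigs3_eigenvalue He hl) => [->|[->|->]].
- have := Re_le (l1 q) (- (KK * EE q)).
  rewrite -complexRe -(rmorph0 (real_complex R)) ltcR opprK Re_KE -rhE => H; apply: (le_lt_trans H).
  rewrite /KK /EE in H1 *; move: H1; rewrite -rhE => H1.
  have : 0 < K * rh q ^+ 2 by rewrite mulr_gt0 //; lra.
  lra.
- have := Re_le (l2 q) (- (P * EE q)).
  rewrite -complexRe -(rmorph0 (real_complex R)) ltcR opprK /P /EE Re_KE -rhE => H; apply: (le_lt_trans H).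
  move: H2; rewrite /P /EE -rhE => H2.
  have : 0 < alpha * h * rh q ^+ 2 by rewrite !mulr_gt0 //; lra.
  lra.
- have := Re_le (l3 q) (z0 q).
  rewrite -complexRe -(rmorph0 (real_complex R)) ltcR /z0 /X /T /AA Re_z0 => H; apply: (le_lt_trans H).
  move: H3; rewrite expr0 mulr1 nrmBC /z0 /X /T /AA => H3.
  lra.
Qed.

Unset Implicit Arguments.

Theorem proposition4p3 (R : realType) (theta alpha K m n e s rho h : R) :
  0 < theta < pi / 2 -> 0 < alpha -> 0 <= K -> 0 < m -> 0 < n ->
  0 < e -> 0 < s -> 0 < rho -> 0 < h ->
  let A := Asym theta alpha K m n e s rho h in
  let c := cbar theta m n e s h in
  let a := acoef e s rho h in
  (* (i) K > 0 : asymptotics as eps^2 = xi^2 + eta^2 -> +oo, and stability *)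
  (0 < K ->
    (exists l1 l2 l3 : R -> R -> R[i],
      (forall xi eta, eigs3 (A xi eta) (l1 xi eta) (l2 xi eta) (l3 xi eta)) /\
      (forall d : R, 0 < d -> exists M : R, forall xi eta : R,
         M < xi ^+ 2 + eta ^+ 2 ->
         `| l1 xi eta - (- K * (xi ^+ 2 + eta ^+ 2))%:C |
            <= (d * (xi ^+ 2 + eta ^+ 2))%:C /\
         `| l2 xi eta - (- alpha * h * (xi ^+ 2 + eta ^+ 2))%:C |
            <= (d * (xi ^+ 2 + eta ^+ 2))%:C /\
         `| l3 xi eta - (- ('i * (xi * tan theta)%:C) - a%:C) | <= d%:C)) /\
    (exists M : R, forall xi eta : R,
       M < xi ^+ 2 + eta ^+ 2 -> spectrally_stable (A xi eta))) /\
  (* (ii) K = 0, xi <> 0 : asymptotics as eps^2 -> +oo along the ray t (xi0, eta0) *)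
  (K = 0 -> forall xi0 eta0 : R, xi0 != 0 ->
    exists l1 l2 l3 : R -> R[i],
      (forall t, eigs3 (A (t * xi0) (t * eta0)) (l1 t) (l2 t) (l3 t)) /\
      (forall d : R, 0 < d -> exists M : R, forall t : R, M < t ->
         let xi := t * xi0 in
         let eps2 := xi ^+ 2 + (t * eta0) ^+ 2 in
         `| l1 t - (s * c / (e * h) * (m - xi ^+ 2 / eps2 * n))%:C | <= d%:C /\
         `| l2 t - (- alpha * h * eps2)%:C | <= (d * eps2)%:C /\
         `| l3 t - (- ('i * (xi * tan theta)%:C) - a%:C) | <= d%:C)) /\
  (* (iii) K = 0, xi = 0 : asymptotics as eta -> +oo *)
  (K = 0 ->
    exists l1 l2 l3 : R -> R[i],
      (forall eta, eigs3 (A 0 eta) (l1 eta) (l2 eta) (l3 eta)) /\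
      (forall eta, l1 eta = 0) /\
      (forall d : R, 0 < d -> exists M : R, forall eta : R, M < eta ->
         `| l2 eta - (- alpha * h * eta ^+ 2)%:C | <= (d * eta ^+ 2)%:C /\
         `| l3 eta - (s * c / (e * h) * (m - rho / c))%:C | <= d%:C)).
Proof.
move=> ht ha hK hm hn he hs hr hh A c a.
split; [|split].
- by move=> hK0; exact: (part1 ht ha hK0 hm hn he hs hr hh).
- by move=> K0; subst K; exact: (part2 ht ha hm hn he hs hr hh).
- by move=> K0; subst K; exact: (part3 ht ha hm hn he hs hr hh).
Qed.
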